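(* Let $c\ge1$, let $G$ be a multigraph with vertex set $V(G)=S\cup\mathcal{T}$ where $S\cap\mathcal{T}=\emptyset$ and $\mathcal{T}$ is the terminal set, and let $X\subseteq S$ be connectivity-$c$ linked in $G$. Then $G/X$ is a connectivity-$c$ mimicking network for $(G,\mathcal{T})$.
   Context: For disjoint vertex sets $A,B$, $E_G(A,B)$ is the set of edges with one endpoint in $A$ and the other in $B$; for $Y\subseteq V(G)$, $\partial(Y)=E_G(Y,V(G)\setminus Y)$. $\mathrm{mincut}_G(A,B)$ is the minimum number of edges whose removal leaves no path between $A$ and $B$ ($0$ if either set is empty), and $\mathrm{mincut}^c_G(A,B)=\min\{\mathrm{mincut}_G(A,B),c\}$. A multigraph $H$ is a connectivity-$c$ mimicking network for $(G,\mathcal{T})$ if $V(H)$ contains a copy of each terminal and $\mathrm{mincut}^c_H(A,B)=\mathrm{mincut}^c_G(A,B)$ for all disjoint $A,B\subseteq\mathcal{T}$. A set $X\subseteq S$ is connectivity-$c$ linked in $G$ if for every pair of disjoint sets $A,B$ with $A\cup B=X$ we have $|E_G(A,B)|\ge \min\big(|\partial(A)\cap\partial(X)|,\ |\partial(B)\cap\partial(X)|,\ c\big)$. $G/X$ denotes the multigraph obtained from $G$ by contracting all edges of $G[X]$ (identifying $X$ into a single vertex, deleting self-loops and keeping parallel edges). *)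

(* Defs.v *)
From mathcomp Require Import all_boot.
Set Implicit Arguments. Unset Strict Implicit. Unset Printing Implicit Defensive.

(* A finite multigraph on vertex type V: a finite type of edges, each with two
   endpoints (parallel edges allowed; self-loops allowed but irrelevant). *)
Record multigraph (V : finType) := Multigraph {
  edge : finType;
  src : edge -> V;
  tgt : edge -> V }.

Section Defs.
Variable V : finType.
Implicit Types (G : multigraph V) (A B Y X T : {set V}).

Definition E_G G A B : {set edge G} :=
  [set e | ((src e \in A) && (tgt e \in B)) || ((src e \in B) && (tgt e \in A))].

Definition bnd G Y : {set edge G} := E_G G Y (~: Y).

Definition adj G (F : {set edge G}) : rel V := fun x y =>
  [exists e : edge G, (e \notin F) &&
     (((src e == x) && (tgt e == y)) || ((src e == y) && (tgt e == x)))].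

Definition separates G (F : {set edge G}) A B : bool :=
  [forall a, forall b, (a \in A) ==> (b \in B) ==> ~~ connect (adj F) a b].

(* mincut_G(A,B): minimum number of edges whose removal separates A from B
   (0 if A or B is empty, since F = set0 then separates) *)
Definition mincut G A B : nat :=
  \big[minn/#|edge G|]_(F : {set edge G} | separates F A B) #|F|.

Definition mincutc (c : nat) G A B : nat := minn (mincut G A B) c.

Definition linked (c : nat) G X : Prop :=
  forall A B, [disjoint A & B] -> A :|: B = X ->
    minn (minn #|bnd G A :&: bnd G X| #|bnd G B :&: bnd G X|) c <= #|E_G G A B|.

End Defs.

(* H (on vertex type W) is a connectivity-c mimicking network for (G,T),
   where phi maps each terminal to its copy in V(H). *)
Definition mimicking (V W : finType) (c : nat) (G : multigraph V) (T : {set V})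
    (H : multigraph W) (phi : V -> W) : Prop :=
  {in T &, injective phi} /\
  forall A B : {set V}, A \subset T -> B \subset T -> [disjoint A & B] ->
    mincutc c H (phi @: A) (phi @: B) = mincutc c G A B.

(* G/X: vertices are the vertices outside X plus one new vertex (None) for X;
   the edges of G[X] are deleted, all other edges kept with endpoints mapped. *)
Definition cvert (V : finType) (X : {set V}) : finType := option {v : V | v \notin X}.

Definition cmap (V : finType) (X : {set V}) (v : V) : cvert X := insub v.

Definition cedge (V : finType) (G : multigraph V) (X : {set V}) : finType :=
  {e : edge G | ~~ ((src e \in X) && (tgt e \in X))}.

Definition contract (V : finType) (G : multigraph V) (X : {set V}) : multigraph (cvert X) :=
  @Multigraph (cvert X) (cedge G X)
    (fun e => cmap X (src (val e))) (fun e => cmap X (tgt (val e))).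

(* Main.v *)
Require Import Defs.
From mathcomp Require Import all_boot.
From mathcomp Require Import zify.
Set Implicit Arguments. Unset Strict Implicit.

Lemma bigmin_lb (I : finType) (P : pred I) (f : I -> nat) (d n : nat) :
  (forall i, P i -> n <= f i) -> n <= d -> n <= \big[minn/d]_(i | P i) f i.
Proof.
move=> H Hd; apply: (big_ind (fun x => n <= x)) => //.
by move=> x y Hx Hy; rewrite leq_min Hx Hy.
Qed.

Lemma bigmin_ub (I : finType) (P : pred I) (f : I -> nat) (d : nat) i0 :
  P i0 -> \big[minn/d]_(i | P i) f i <= f i0.
Proof.
move=> Pi; have : i0 \in index_enum I by rewrite mem_index_enum.
elim: (index_enum I) => [|j r IH] //; rewrite inE big_cons => /orP[/eqP<-|/IH H].
  by rewrite Pi geq_minl.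
by case: (P j) => //; exact: leq_trans (geq_minr _ _) H.
Qed.

Lemma conn_inv (T : finType) (e : rel T) (f : T -> bool) x y :
  (forall x y, e x y -> f x = f y) -> connect e x y -> f x = f y.
Proof.
move=> H /connectP [p pth ->]; elim: p x pth => //= z p IH x /andP[exz pz].
by rewrite (H _ _ exz) IH.
Qed.

Lemma conn_map (T U : finType) (e : rel T) (e' : rel U) (f : T -> U) x y :
  (forall x y, e x y -> connect e' (f x) (f y)) ->
  connect e x y -> connect e' (f x) (f y).
Proof.
move=> H /connectP [p pth ->]; elim: p x pth => //= z p IH x /andP[exz pz].
exact: connect_trans (H _ _ exz) (IH _ pz).
Qed.

Lemma cmapS (V : finType) (X : {set V}) v :
  v \notin X -> omap val (cmap X v) = Some v.
Proof. by move=> vX; rewrite /cmap insubT. Qed.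

Lemma cmapN (V : finType) (X : {set V}) v : v \in X -> cmap X v = None.
Proof. by move=> vX; rewrite /cmap insubN // negbK. Qed.

Lemma cmap_eq (V : finType) (X : {set V}) u v :
  cmap X u = cmap X v -> u = v \/ (u \in X /\ v \in X).
Proof.
case: (boolP (u \in X)) => uX; case: (boolP (v \in X)) => vX.
- by right.
- by rewrite (cmapN uX) => /(congr1 (omap val)); rewrite cmapS.
- by rewrite (cmapN vX) => /(congr1 (omap val)); rewrite cmapS.
- move/(congr1 (omap val)); rewrite !cmapS // => -[]; by left.
Qed.

Lemma disjF (T : finType) (A B : {set T}) x :
  [disjoint A & B] -> x \in A -> x \in B -> False.
Proof. by rewrite disjoint_subset => /subsetP H /H; rewrite inE => /negP. Qed.

Lemma disjI (T : finType) (A B : {set T}) :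
  (forall x, x \in A -> x \in B -> False) -> [disjoint A & B].
Proof.
move=> H; rewrite disjoint_subset; apply/subsetP => x xA; rewrite inE.
by apply/negP; apply: H.
Qed.

Section Main.
Variables (V : finType) (G : multigraph V) (X : {set V}).

Lemma contract_cut (A B R : {set V}) :
  (forall x y, x \in X -> y \in X -> (x \in R) = (y \in R)) ->
  A \subset R -> [disjoint R & B] ->
  mincut (contract G X) (cmap X @: A) (cmap X @: B) <= #|bnd G R|.
Proof.
move=> HX AR RB.
pose F' : {set cedge G X} := [set e | val e \in bnd G R].
pose s (w : cvert X) := [exists v, (cmap X v == w) && (v \in R)].
have sE v : s (cmap X v) = (v \in R).
  apply/existsP/idP => [[u /andP[/eqP/cmap_eq [->|[uX vX]] uR]]|vR] //.
    by rewrite -(HX _ _ uX vX).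
  by exists v; rewrite eqxx.
have sep : separates (G := contract G X) F' (cmap X @: A) (cmap X @: B).
  apply/forallP => w1; apply/forallP => w2; apply/implyP => /imsetP[a aA ->].
  apply/implyP => /imsetP[b bB ->]; apply/negP => /(conn_inv (f := s)) H.
  have : s (cmap X a) = s (cmap X b).
    apply: H => x y /existsP[e /andP[eF /orP[]/andP[/eqP<- /eqP<-]]];
    rewrite /= !sE; move: eF; rewrite inE /bnd /E_G inE !inE;
    by case: (src (val e) \in R); case: (tgt (val e) \in R).
  rewrite !sE (subsetP AR _ aA).
  have : b \notin R by apply/negP => bR; move: RB; rewrite disjoint_subset => /subsetP /(_ b bR); rewrite inE bB.
  by move/negbTE => ->.
apply: leq_trans (bigmin_ub _ _ _) _; first exact: sep.
rewrite -(card_imset _ val_inj); apply: subset_leq_card.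
by apply/subsetP => y /imsetP[e]; rewrite inE => ? ->.
Qed.

Lemma lift_cut (A B : {set V}) :
  {in A & B, forall a b, cmap X a != cmap X b} ->
  mincut G A B <= mincut (contract G X) (cmap X @: A) (cmap X @: B).
Proof.
move=> Hab.
have key (F' : {set cedge G X}) :
    separates (G := contract G X) F' (cmap X @: A) (cmap X @: B) ->
    mincut G A B <= #|F'|.
  move=> sep; pose F : {set edge G} := val @: F'.
  have sepF : separates F A B.
    apply/forallP => a; apply/forallP => b; apply/implyP => aA; apply/implyP => bB.
    apply/negP => C.
    have := forallP (forallP sep (cmap X a)) (cmap X b).
    rewrite !imset_f //= => /negP; apply.
    apply: (conn_map _ C) => u v /existsP[e /andP[eF H]].
    case: (boolP ((src e \in X) && (tgt e \in X))) => [/andP[sX tX]|nX].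
      by case/orP: H => /andP[/eqP<- /eqP<-]; rewrite !cmapN.
    pose e' : cedge G X := exist _ e nX.
    apply: connect1; apply/existsP; exists e'; apply/andP; split.
      by apply/negP => e'F; move/negP: eF; apply; apply/imsetP; exists e'.
    by case/orP: H => /andP[/eqP<- /eqP<-]; rewrite /= !eqxx ?orbT.
  apply: leq_trans (bigmin_ub _ _ _) _; first exact: sepF.
  by rewrite card_imset //; apply: val_inj.
apply: bigmin_lb; first exact: key.
have -> : #|cedge G X| = #|[set: cedge G X]| by rewrite cardsT.
apply: key; apply/forallP => w1; apply/forallP => w2.
apply/implyP => /imsetP[a aA ->]; apply/implyP => /imsetP[b bB ->].
apply/negP => /connectP [[|z p] /= pth Eq].
  by move: (Hab a b aA bB); rewrite Eq eqxx.
by case/andP: pth => /existsP[e]; rewrite inE.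
Qed.


Lemma cut_bound c (A B : {set V}) (F : {set edge G}) :
  linked c G X -> [disjoint X & A] -> [disjoint X & B] -> separates F A B ->
  minn (mincut (contract G X) (cmap X @: A) (cmap X @: B)) c <= #|F|.
Proof.
move=> Hl dXA dXB sep.
pose R := [set v | [exists a, (a \in A) && connect (adj F) a v]].
have AR : A \subset R.
  by apply/subsetP => a aA; rewrite inE; apply/existsP; exists a; rewrite aA connect0.
have RB : [disjoint R & B].
  apply: disjI => v; rewrite inE => /existsP[a /andP[aA av]] vB.
  by move: (forallP (forallP sep a) v); rewrite aA vB av.
have Rstep u w : adj F u w -> u \in R -> w \in R.
  move=> uw; rewrite !inE => /existsP[a /andP[aA au]].
  by apply/existsP; exists a; rewrite aA (connect_trans au (connect1 uw)).
clearbody R.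
have bRF : bnd G R \subset F.
  apply/subsetP => e eb; apply/negPn/negP => eF.
  have h1 : adj F (src e) (tgt e)
    by apply/existsP; exists e; rewrite eF !eqxx.
  have h2 : adj F (tgt e) (src e)
    by apply/existsP; exists e; rewrite eF !eqxx orbT.
  move: eb; rewrite /bnd /E_G !inE => /orP[]/andP[sR tR].
    by move: (Rstep _ _ h1 sR); rewrite (negbTE tR).
  by move: (Rstep _ _ h2 tR); rewrite (negbTE sR).
pose P := X :&: R; pose Q := X :\: R.
have dPQ : [disjoint P & Q].
  by apply: disjI => x; rewrite !inE => /andP[_ ->] /andP[].
have := Hl P Q dPQ (setID X R).
set EPQ := E_G G P Q.
have EPQs : EPQ \subset bnd G R.
  apply/subsetP => e; rewrite /EPQ /bnd /E_G !inE.
  by case: (src e \in X); case: (src e \in R); case: (tgt e \in X); case: (tgt e \in R).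
have sub1 : bnd G (R :|: X) \subset (bnd G R :\: EPQ) :|: (bnd G Q :&: bnd G X).
  apply/subsetP => e; rewrite /EPQ /bnd /E_G !inE.
  by case: (src e \in X); case: (src e \in R); case: (tgt e \in X); case: (tgt e \in R).
have sub2 : bnd G (R :\: X) \subset (bnd G R :\: EPQ) :|: (bnd G P :&: bnd G X).
  apply/subsetP => e; rewrite /EPQ /bnd /E_G !inE.
  by case: (src e \in X); case: (src e \in R); case: (tgt e \in X); case: (tgt e \in R).
have c1 := subset_leq_card sub1; have c2 := subset_leq_card sub2.
rewrite !cardsU (cardsDS EPQs) in c1 c2.
have c3 := subset_leq_card bRF; have c4 := subset_leq_card EPQs.
have m1 : mincut (contract G X) (cmap X @: A) (cmap X @: B) <= #|bnd G (R :|: X)|.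
  apply: contract_cut.
  - by move=> x y xX yX; rewrite !inE xX yX !orbT.
  - by apply: subset_trans AR (subsetUl _ _).
  - apply: disjI => x; rewrite inE => /orP[xR|xX] xB.
      exact: disjF RB xR xB.
    exact: disjF dXB xX xB.
have m2 : mincut (contract G X) (cmap X @: A) (cmap X @: B) <= #|bnd G (R :\: X)|.
  apply: contract_cut.
  - by move=> x y xX yX; rewrite !inE xX yX.
  - apply/subsetP => a aA; rewrite inE (subsetP AR _ aA) andbT.
    by apply/negP => aX; apply: disjF dXA aX aA.
  - apply: disjI => x; rewrite inE => /andP[_ xR] xB.
    exact: disjF RB xR xB.
move=> H.
set m := mincut _ _ _ in m1 m2 *.
set bR := #|bnd G R| in c1 c2 c3 c4.
set k := #|EPQ| in H c1 c2 c4.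
set a := #|bnd G P :&: bnd G X| in H c2.
set b := #|bnd G Q :&: bnd G X| in H c1.
move: (leq_subr #|bnd G R :\: EPQ :&: (bnd G Q :&: bnd G X)| (bR - k + b)) => e1.
move: (leq_subr #|bnd G R :\: EPQ :&: (bnd G P :&: bnd G X)| (bR - k + a)) => e2.
lia.
Qed.

End Main.

Theorem mainTheorem2 (V : finType) (G : multigraph V) (T X : {set V}) (c : nat) :
  1 <= c ->
  [disjoint X & T] ->
  linked c G X ->
  mimicking c G T (contract G X) (@cmap V X).
Proof.
move=> c1 dXT Hl; split.
  move=> a b aT bT /cmap_eq [//|[aX _]]; case: (disjF dXT aX aT).
move=> A B sAT sBT dAB.
have dXA : [disjoint X & A] by apply: disjointWr sAT dXT.
have dXB : [disjoint X & B] by apply: disjointWr sBT dXT.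
have Hab : {in A & B, forall a b, cmap X a != cmap X b}.
  move=> a b aA bB; apply/negP => /eqP/cmap_eq [eab|[aX _]].
    by subst; apply: disjF dAB aA bB.
  exact: disjF dXA aX aA.
have le1 := lift_cut G Hab.
have le2 : minn (mincut (contract G X) (cmap X @: A) (cmap X @: B)) c <= mincut G A B.
  apply: bigmin_lb => [F sF|]; first exact: cut_bound.
  have -> : #|edge G| = #|[set: edge G]| by rewrite cardsT.
  apply: cut_bound => //; apply/forallP => a; apply/forallP => b.
  apply/implyP => aA; apply/implyP => bB.
  apply/negP => /connectP [[|z p] /= pth Eq].
    by subst; apply: disjF dAB aA bB.
  by case/andP: pth => /existsP[e]; rewrite inE.
rewrite /mincutc; lia.
Qed.
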